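(* Let $2\leq d\leq k$ be integers, $\Sigma_k=\{\sigma_1,\ldots,\sigma_k\}$, $\Sigma_d=\{\sigma_1,\ldots,\sigma_d\}$, $n\geq 1$, and let $\mathcal{G}\subseteq\Sigma_k^n$. Put $\mathcal{G}'=\mathcal{G}\cap\Sigma_d^n$. Suppose $\mathcal{G}$ is closed under replacing $\sigma_i$ by $\sigma_j$ for any $i>d$ and $j\in[k]$, i.e. whenever $g\in\mathcal{G}$ has the letter $\sigma_i$ with $i>d$ in some coordinate, the word obtained from $g$ by changing that coordinate to any letter $\sigma_j$, $j\in[k]$, also lies in $\mathcal{G}$. Then either $|\mathcal{G}|=|\mathcal{G}'|=0$ or $\log_k|\mathcal{G}|\leq\log_d|\mathcal{G}'|$. *)

(* Defs.v *)
From mathcomp Require Import all_boot.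
From Stdlib Require Import Reals.
Set Implicit Arguments. Unset Strict Implicit. Unset Printing Implicit Defensive.

(* Letters sigma_1..sigma_k are encoded as 'I_k = {0,..,k-1} (sigma_{i+1} <-> i).
   Words of length n over Sigma_k are {ffun 'I_n -> 'I_k}. *)
Definition word (n k : nat) := {ffun 'I_n -> 'I_k}.

Definition upd (n k : nat) (g : word n k) (i : 'I_n) (j : 'I_k) : word n k :=
  [ffun t => if t == i then j else g t].

Definition restr (n k d : nat) (G : {set word n k}) : {set word n k} :=
  [set g in G | [forall t, (g t < d)%N]].

(* closure: any coordinate carrying a letter sigma_i with i > d (i.e. index >= d)
   may be changed to any letter of Sigma_k *)
Definition closed_high (n k d : nat) (G : {set word n k}) : Prop :=
  forall g, g \in G -> forall i : 'I_n, (d <= g i)%N ->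
    forall j : 'I_k, upd g i j \in G.

Definition logb (b x : R) : R := Rdiv (ln x) (ln b).

(* Main.v *)
Require Import Defs.
From mathcomp Require Import all_boot.
From Stdlib Require Import Reals.
From Stdlib Require Import Lra Lia.
From mathcomp Require Import zify.
From Coquelicot Require Derive Rbar.


Definition Q (b x : R) : R := if Rlt_dec 0%R x then Rpower x b else 0%R.

Lemma Q_pos b x : (0 < x)%R -> Q b x = Rpower x b.
Proof. intros H; unfold Q; destruct (Rlt_dec 0%R x); [reflexivity| lra]. Qed.
Lemma Q_npos b x : (x <= 0)%R -> Q b x = 0%R.
Proof. intros H; unfold Q; destruct (Rlt_dec 0%R x); [lra| reflexivity]. Qed.
Lemma Q_ge0 b x : (0 <= Q b x)%R.
Proof. unfold Q; destruct (Rlt_dec 0%R x); simpl; [unfold Rpower; left; apply exp_pos| lra]. Qed.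

Lemma superadd b a c : (1 <= b)%R -> (0 < a)%R -> (0 < c)%R ->
  (Rpower a b + Rpower c b <= Rpower (a + c) b)%R.
Proof.
intros Hb Ha Hc.
assert (E : forall x, (0 < x)%R -> Rpower x b = (Rpower x (b - 1) * x)%R).
{ intros x Hx. replace b with ((b - 1) + 1)%R at 1 by ring.
  rewrite Rpower_plus Rpower_1; auto. }
rewrite !E; try lra.
assert (H1 : (Rpower a (b-1) <= Rpower (a+c) (b-1))%R) by (apply Rle_Rpower_l; lra).
assert (H2 : (Rpower c (b-1) <= Rpower (a+c) (b-1))%R) by (apply Rle_Rpower_l; lra).
nra.
Qed.

Lemma incr_pos b C s t : (1 < b)%R -> (0 < C)%R -> (0 < s)%R -> (s < t)%R ->
  (Rpower (s + C) b - Rpower s b < Rpower (t + C) b - Rpower t b)%R.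
Proof.
intros Hb HC Hs Hst.
apply (Derive.incr_function (fun x => Rpower (x + C) b - Rpower x b)%R (Rbar.Finite 0) Rbar.p_infty
  (fun x => b * Rpower (x + C) (b - 1) * 1 - b * Rpower x (b - 1))%R); simpl; auto.
- intros x Hx _. apply Derive.is_derive_Reals.
  apply derivable_pt_lim_minus.
  + apply (derivable_pt_lim_comp (fun x => x + C)%R (fun y => Rpower y b)).
    * replace 1%R with (1 + 0)%R by ring. apply derivable_pt_lim_plus.
      apply derivable_pt_lim_id. apply derivable_pt_lim_const.
    * apply derivable_pt_lim_power; lra.
  + apply derivable_pt_lim_power; lra.
- intros x Hx _.
  assert (Rpower x (b-1) < Rpower (x + C) (b-1))%R by (apply Rlt_Rpower_l; lra).
  nra.
Qed.

Lemma two_point b C s t : (1 <= b)%R -> (0 <= C)%R -> (0 <= s)%R -> (s <= t)%R ->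
  (Q b (s + C) - Q b s <= Q b (t + C) - Q b t)%R.
Proof.
intros Hb HC Hs Hst.
destruct (Req_dec C 0) as [->|HC0].
{ rewrite !Rplus_0_r; lra. }
destruct (Req_dec s t) as [->|Hst0]; [lra|].
assert (HC' : (0 < C)%R) by lra.
destruct (Req_dec s 0) as [->|Hs0].
- rewrite Rplus_0_l (Q_npos b 0) ; last lra.
  rewrite !Q_pos; try lra.
  pose proof (superadd b t C Hb ltac:(lra) HC'). lra.
- rewrite !Q_pos; try lra.
  destruct (Req_dec b 1) as [->|Hb1].
  + rewrite !Rpower_1; lra.
  + left. apply incr_pos; lra.
Qed.

Definition RS (s : seq R) : R := foldr Rplus 0%R s.

Lemma INR_sum (f : nat -> nat) (s : seq nat) :
  INR (\sum_(b <- s) f b) = RS [seq INR (f b) | b <- s].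
Proof.
elim: s => [|a s IH]; first by rewrite big_nil.
by rewrite big_cons /= plus_INR IH.
Qed.

Lemma RS_le (u v : nat -> R) (s : seq nat) :
  (forall b, b \in s -> (u b <= v b)%R) ->
  (RS [seq u b | b <- s] <= RS [seq v b | b <- s])%R.
Proof.
elim: s => [|a s IH] H /=; first lra.
apply Rplus_le_compat; first by apply H; rewrite mem_head.
apply IH => b Hb; apply H; by rewrite inE Hb orbT.
Qed.

Lemma RS_const (u : nat -> R) (s : seq nat) c :
  (forall b, b \in s -> (u b <= c)%R) ->
  (RS [seq u b | b <- s] <= INR (size s) * c)%R.
Proof.
elim: s => [|a s IH] H; first (simpl; lra).
change (size (a :: s)) with (size s).+1; rewrite S_INR.
change (RS [seq u b | b <- a :: s]) with (u a + RS [seq u b | b <- s])%R.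
have H1 : (u a <= c)%R by apply H; rewrite mem_head.
have H2 := IH (fun b Hb => H b (ltac:(rewrite inE Hb orbT; done))).
lra.
Qed.

Definition rsum b (ys : seq nat) : R := RS [seq Q b (INR y) | y <- ys].

Lemma listL b : (1 <= b)%R -> forall (ys : seq nat) (p m : nat),
  all (fun y => m <= y)%N ys ->
  (Q b (INR ((size ys + p) * m)) - INR (size ys + p) * Q b (INR m) <=
   Q b (INR (sumn ys + p * m)) - rsum b ys - INR p * Q b (INR m))%R.
Proof.
move=> Hb; elim => [|y ys IH] p m.
  move=> _; rewrite /rsum /= !add0n; lra.
move=> /andP [Hmy Hall].
change (size (y :: ys)) with (size ys).+1.
change (sumn (y :: ys)) with (y + sumn ys).
have := IH p.+1 m Hall.
rewrite addSnnS.
have Ht := two_point b (INR (sumn ys + p * m)) (INR m) (INR y) Hb (pos_INR _) (pos_INR _)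
   (le_INR _ _ (elimT leP Hmy)).
rewrite /rsum.
change (RS [seq Q b (INR y0) | y0 <- y :: ys]) with (Q b (INR y) + RS [seq Q b (INR y0) | y0 <- ys])%R.
have E1 : (INR m + INR (sumn ys + p * m) = INR (sumn ys + p.+1 * m))%R.
  rewrite -plus_INR; congr INR; rewrite mulSn; lia.
have E2 : (INR y + INR (sumn ys + p * m) = INR (y + sumn ys + p * m))%R.
  rewrite -plus_INR; congr INR; lia.
rewrite E1 E2 in Ht.
rewrite S_INR.
lra.
Qed.

Set Implicit Arguments. Unset Strict Implicit.
Section Comb.
Variables (n k d : nat) (z : 'I_k).
Hypothesis zd : (z < d)%N.

Definition mu (G : {set word n k}) :=
  #|[set t : 'I_n | [exists g in G, g t != z]]|.

Definition Gb (G : {set word n k}) (i : 'I_n) (b : nat) : {set word n k} :=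
  [set upd g i z | g in [set g in G | val (g i) == b]].

Lemma updE (g : word n k) i j t : upd g i j t = if t == i then j else g t.
Proof. by rewrite /upd ffunE. Qed.

Lemma card_Gb G i b : #|Gb G i b| = #|[set g in G | val (g i) == b]|.
Proof.
apply: card_in_imset => g1 g2; rewrite !inE => /andP [_ /eqP H1] /andP [_ /eqP H2] E.
apply/ffunP => t; have := congr1 (fun w : word n k => w t) E; rewrite !updE.
case: eqP => [->|//] _; apply: val_inj; by rewrite H1 H2.
Qed.

Lemma restr_Gb G i b : (b < d)%N -> restr d (Gb G i b) = Gb (restr d G) i b.
Proof.
move=> bd; apply/setP => w; rewrite !inE.
apply/andP/imsetP.
- move=> [/imsetP [g] ]; rewrite inE => /andP [gG /eqP gi] -> /forallP low.
  exists g => //; rewrite !inE gG gi eqxx andbT /=.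
  apply/forallP => t; have := low t; rewrite updE.
  by case: eqP => [->|//] _; rewrite gi.
- move=> [g]; rewrite !inE => /andP [/andP [gG /forallP low] gi] ->.
  split; first by apply/imsetP; exists g => //; rewrite inE gG gi.
  by apply/forallP => t; rewrite updE; case: eqP.
Qed.

Lemma closed_Gb G i b : closed_high d G -> closed_high d (Gb G i b).
Proof.
move=> cl w /imsetP [g]; rewrite inE => /andP [gG /eqP gi] -> t.
rewrite updE; have [_|ti] := eqVneq t i; first by rewrite leqNgt zd.
move=> dt j.
have it : (i == t) = false by rewrite eq_sym (negbTE ti).
apply/imsetP; exists (upd g t j).
  by rewrite inE cl // updE it gi eqxx.
apply/ffunP => s; rewrite !updE.
by have [->|si] := eqVneq s i; rewrite ?it.
Qed.

Lemma Gb_sub (G : {set word n k}) (i : 'I_n) (b c : nat) : closed_high d G -> (d <= b)%N -> (c < k)%N ->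
  Gb G i b \subset Gb G i c.
Proof.
move=> cl db ck; apply/subsetP => w /imsetP [g]; rewrite inE => /andP [gG /eqP gi] ->.
apply/imsetP; exists (upd g i (Ordinal ck)).
  by rewrite inE cl ?gi // updE eqxx /=.
by apply/ffunP => s; rewrite !updE; case: eqP.
Qed.

Lemma mu_Gb (G : {set word n k}) (i : 'I_n) (b : nat) (g0 : word n k) : g0 \in G -> g0 i != z -> (mu (Gb G i b) < mu G)%N.
Proof.
move=> g0G g0i; apply: proper_card; apply/properP; split.
  apply/subsetP => t; rewrite !inE => /existsP [w /andP [/imsetP [g]]].
  rewrite inE => /andP [gG _] -> /=; rewrite updE.
  case: (t =P i) => [_|_ gt] /=; first by rewrite eqxx.
  by apply/existsP; exists g; rewrite gG.
exists i; first by rewrite inE; apply/existsP; exists g0; rewrite g0G.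
rewrite inE; apply/negP => /existsP [w /andP [/imsetP [g _ ->]]].
by rewrite updE eqxx eqxx.
Qed.

Lemma card_split (G : {set word n k}) i :
  #|G| = \sum_(0 <= b < k) #|[set g in G | val (g i) == b]|.
Proof.
rewrite big_mkord -sum1_card.
rewrite (partition_big (fun g : word n k => g i) xpredT) //=.
apply: eq_bigr => b _; rewrite -sum1_card; apply: eq_bigl => g.
by rewrite inE.
Qed.

End Comb.

Lemma ex_min (f : nat -> nat) (d : nat) : (0 < d)%N ->
  exists bs, (bs < d)%N /\ forall c, (c < d)%N -> (f bs <= f c)%N.
Proof.
elim: d => [//|d IH] _.
case: (posnP d) => [->|dpos].
  by exists 0%N; split => // c; rewrite ltnS leqn0 => /eqP ->.
have [bs [bsd bmin]] := IH dpos.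
case: (leqP (f bs) (f d)) => h.
  exists bs; split; first by apply: ltnW.
  move=> c; rewrite ltnS leq_eqVlt => /orP [/eqP ->|]; [exact: h| exact: bmin].
exists d; split => // c; rewrite ltnS leq_eqVlt => /orP [/eqP ->//|cd].
by apply: leq_trans (ltnW h) (bmin c cd).
Qed.

Lemma Qmul b (d m : nat) : (0 < d)%N ->
  Q b (INR (d * m)) = (Rpower (INR d) b * Q b (INR m))%R.
Proof.
move=> d0; case: (posnP m) => [->|m0].
  by rewrite muln0 Q_npos /= ?Rmult_0_r; lra.
have dR : (0 < INR d)%R by apply: lt_0_INR; apply/ltP.
have mR : (0 < INR m)%R by apply: lt_0_INR; apply/ltP.
rewrite mult_INR !Q_pos; try nra.
by rewrite Rpower_mult_distr.
Qed.

Section Main.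
Variables (n k d : nat) (z : 'I_k) (be : R).
Hypotheses (zd : (z < d)%N) (dk : (d <= k)%N) (d0 : (0 < d)%N)
  (Hb1 : (1 <= be)%R) (Hpow : Rpower (INR d) be = INR k).

Lemma mainQ N (G : {set word n k}) : (mu z G < N)%N -> closed_high d G ->
  (INR #|G| <= Q be (INR #|restr d G|))%R.
Proof.
elim: N G => [//|N IH] G muN cl.
case: (boolP [exists i : 'I_n, [exists g in G, g i != z]]);
  last first.
  move=> H.
  have allz : forall g, g \in G -> g = [ffun => z].
    move=> g gG; apply/ffunP => t; rewrite ffunE; apply/eqP.
    apply: contraNT H => ne; apply/existsP; exists t; apply/existsP; exists g.
    by rewrite gG ne.
  have rG : restr d G = G.
    apply/setP => g; rewrite inE; case gG: (g \in G) => //=.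
    by rewrite (allz g gG); apply/forallP => t; rewrite ffunE zd.
  rewrite rG.
  have : (#|G| <= 1)%N.
    rewrite -(cards1 ([ffun => z] : word n k)); apply: subset_leq_card.
    by apply/subsetP => g gG; rewrite inE (allz g gG).
  case: #|G| => [|[|//]] _.
    by rewrite Q_npos /=; lra.
  rewrite Q_pos /=; last lra.
  by rewrite /Rpower ln_1 Rmult_0_r exp_0; lra.
move=> /existsP [i /existsP [g0 /andP [g0G g0i]]].
set x := fun b => #|Gb z G i b|.
set y := fun b => #|restr d (Gb z G i b)|.
have IHb : forall b, (INR (x b) <= Q be (INR (y b)))%R.
  move=> b; apply: IH; last exact: closed_Gb.
  rewrite ltnS in muN; apply: leq_trans muN; exact: mu_Gb g0G g0i.
have cardG : #|G| = (\sum_(0 <= b < d) x b + \sum_(d <= b < k) x b)%N.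
  rewrite (card_split G i) (big_cat_nat (leq0n d) dk) /=.
  by congr addn; apply: eq_bigr => b _; rewrite /x card_Gb.
have cardR : #|restr d G| = (\sum_(0 <= b < d) y b)%N.
  rewrite (card_split (restr d G) i) (big_cat_nat (leq0n d) dk) /=.
  rewrite [X in (_ + X)%N]big_nat_cond [X in (_ + X)%N]big1 ?addn0.
    apply: eq_big_nat => b /andP [_ bd].
    by rewrite /y restr_Gb // card_Gb.
  move=> b /andP [/andP [db _] _]; apply/eqP; rewrite cards_eq0; apply/eqP.
  apply/setP => g; rewrite !inE; apply/negP => /andP [/andP [_ /forallP low] /eqP gi].
  by have := low i; rewrite gi ltnNge db.
have [bs [bsd bmin]] := ex_min y d0.
rewrite cardG cardR plus_INR (INR_sum x (index_iota 0 d)) (INR_sum x (index_iota d k)).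
have B1 : (RS [seq INR (x b) | b <- index_iota 0 d] <=
           rsum be [seq y b | b <- index_iota 0 d])%R.
  by rewrite /rsum -map_comp; apply: RS_le => b _; apply: IHb.
have B2 : (RS [seq INR (x b) | b <- index_iota d k] <=
           INR (k - d) * Q be (INR (y bs)))%R.
  have -> : (k - d)%N = size (index_iota d k) by rewrite size_iota.
  apply: RS_const => b; rewrite mem_index_iota => /andP [db bk].
  apply: Rle_trans (IHb bs).
  apply: le_INR; apply/leP; apply: subset_leq_card; apply: (Gb_sub (d:=d)) => //; exact: leq_trans bsd dk.
have L := listL be Hb1 [seq y b | b <- index_iota 0 d] 0 (y bs).
have Hall : all (fun v => y bs <= v)%N [seq y b | b <- index_iota 0 d].
  apply/allP => v /mapP [b]; rewrite mem_index_iota => /andP [_ bd] ->.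
  exact: bmin.
have := L Hall.
rewrite size_map size_iota subn0 addn0 mul0n addn0.
rewrite Qmul // Hpow.
have -> : sumn [seq y b | b <- index_iota 0 d] = (\sum_(0 <= b < d) y b)%N.
  by rewrite sumnE big_map.
rewrite minus_INR in B2; last by apply/leP.
change (INR 0) with 0%R.

nra.
Qed.

End Main.

Unset Implicit Arguments.

Theorem lemma11 (n k d : nat) (G : {set word n k}) :
  (2 <= d)%N -> (d <= k)%N -> (1 <= n)%N ->
  closed_high d G ->
  (#|G| = 0%N /\ #|restr d G| = 0%N) \/
  Rle (logb (INR k) (INR #|G|)) (logb (INR d) (INR #|restr d G|)).
Proof.
move=> d2 dk n1 cl.
have d0 : (0 < d)%N by apply: leq_trans d2.
have k0 : (0 < k)%N by apply: leq_trans d0 dk.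
pose z := Ordinal k0.
have zd : (z < d)%N by [].
have dR : (1 < INR d)%R by have := lt_INR 1 d; simpl; apply; apply/ltP.
have kR : (INR d <= INR k)%R by apply: le_INR; apply/leP.
have lnd : (0 < ln (INR d))%R by rewrite -ln_1; apply: ln_increasing; lra.
have lnmono : forall a b, (0 < a)%R -> (a <= b)%R -> (ln a <= ln b)%R.
  move=> a b a0 ab; case: (Rle_lt_or_eq_dec _ _ ab) => h.
    by left; apply: ln_increasing.
  by rewrite h; right.
have lnk : (ln (INR d) <= ln (INR k))%R by apply: lnmono; lra.
pose be := (ln (INR k) / ln (INR d))%R.
have Hb1 : (1 <= be)%R.
  apply: (Rmult_le_reg_r (ln (INR d))) => //.
  have -> : (be * ln (INR d) = ln (INR k))%R by rewrite /be; field; lra.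
  lra.
have Hpow : Rpower (INR d) be = INR k.
  rewrite /Rpower.
  have -> : (be * ln (INR d) = ln (INR k))%R by rewrite /be; field; lra.
  by rewrite exp_ln; lra.
have M := @mainQ n k d z be zd dk d0 Hb1 Hpow (mu z G).+1 G (ltnSn _) cl.
case: (posnP #|G|) => [G0|Gpos].
  left; split => //; apply/eqP; rewrite -leqn0 -G0; apply: subset_leq_card.
  by apply/subsetP => g; rewrite inE => /andP [].
right.
have GR : (0 < INR #|G|)%R by apply: lt_0_INR; apply/ltP.
case: (posnP #|restr d G|) => [r0|rpos].
  by rewrite r0 Q_npos in M; [lra | simpl; lra].
have rR : (0 < INR #|restr d G|)%R by apply: lt_0_INR; apply/ltP.
rewrite Q_pos // in M.
have L : (ln (INR #|G|) <= be * ln (INR #|restr d G|))%R.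
  by rewrite -ln_Rpower; apply: lnmono.
rewrite /logb /Rdiv.
apply: Rle_trans (Rmult_le_compat_r (/ ln (INR k)) _ _ _ L) _.
  by left; apply: Rinv_0_lt_compat; lra.
right; rewrite /be; field; lra.
Qed.
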